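(* With $\tilde D$, $E_i$ and $D$ as below, every finite string $E_{j_1}E_{j_2}\cdots E_{j_n}$ of frame vectors (indices arbitrary, repetitions and any order allowed) is product-rule-separable: $$D_{E_i}(E_{j_1}\cdots E_{j_n})=\sum_{r=1}^nE_{j_1}\cdots E_{j_{r-1}}(D_{E_i}E_{j_r})E_{j_{r+1}}\cdots E_{j_n}.$$ Consequently $D_a(AB)=(D_aA)B+A(D_aB)$ for all tangent vectors $a$ and smooth multivector fields $A,B$.
   Context: $M$ is a smooth manifold with a smooth nondegenerate symmetric metric of arbitrary signature, written $a\cdot b$; $\partial_a\varphi=a(\varphi)$. An affine connection $\tilde D$ is linear in the direction, additive in the field, with $\tilde D_a(\lambda v)=(\partial_a\lambda)v+\lambda\tilde D_av$; metric-compatible means $\partial_c(a\cdot b)=(\tilde D_ca)\cdot b+a\cdot\tilde D_cb$. $GT_pM$ is the geometric (Clifford) algebra of $T_pM$ with $aa=a\cdot a$. A frame $E_i$ is orthonormal if $E_i\cdot E_j=\pm\delta_{ij}$; its canonical multivector basis consists of $E_J=E_{j_1}E_{j_2}\cdots E_{j_r}$ for strictly increasing $j_1<\dots<j_r$, with $E_\emptyset=1$, and every smooth multivector field is uniquely $A=\sum_JA^JE_J$ with smooth $A^J$. Given a metric-compatible $\tilde D$ and a smooth local orthonormal frame $E_i$, the operator $D$ is defined by: (i) $D_{\alpha a+\beta b}A=\alpha D_aA+\beta D_bA$; (ii) $D_{E_i}1=0$; (iii) $D_{E_i}E_j=\tilde D_{E_i}E_j$; (iv) $D_a(\sum_JA^JE_J)=\sum_J((\partial_aA^J)E_J+A^JD_aE_J)$;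 (v) for basis elements of grade at least 2, recursively $D_a(E_iE_K)=(D_aE_i)E_K+E_i(D_aE_K)$ whenever $i<k$ for all $k\in K$. *)

(* Defs.v *)
From HB Require Import structures.
From mathcomp Require Import all_boot all_order all_algebra.
Set Implicit Arguments. Unset Strict Implicit. Unset Printing Implicit Defensive.
Import GRing.Theory.
Local Open Scope ring_scope.

Section GA.
(* F : the commutative ring of smooth real functions on the frame domain U;
   n : dimension; s i = E_i . E_i = +-1 (signature of the orthonormal frame). *)
Variables (F : comNzRingType) (n : nat) (s : 'I_n -> F).

(* multivector fields: coefficients A^J on the canonical basis E_J, J a set
   of frame indices (i.e. a strictly increasing index string). *)
Local Notation mv := {ffun {set 'I_n} -> F}.
Local Notation vf := {ffun 'I_n -> F}.

Definition fscale (T : finType) (k : F) (f : {ffun T -> F}) : {ffun T -> F} :=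
  [ffun x => k * f x].

(* E_A E_B = bsign A B * E_(A symdiff B) : Clifford product of basis blades
   for an orthogonal frame with E_i E_i = s i. *)
Definition bsign (A B : {set 'I_n}) : F :=
  (-1) ^+ #|[set p : 'I_n * 'I_n | [&& p.1 \in A, p.2 \in B & (p.2 < p.1)%N]]|
  * \prod_(i in A :&: B) s i.

Definition symd (A B : {set 'I_n}) := (A :\: B) :|: (B :\: A).

Definition mvmul (X Y : mv) : mv :=
  [ffun K => \sum_(A : {set 'I_n}) \sum_(B : {set 'I_n})
     if symd A B == K then bsign A B * X A * Y B else 0].

Definition blade (J : {set 'I_n}) : mv := [ffun K => (K == J)%:R].
Definition mv1 : mv := blade set0.
Definition fE (j : 'I_n) : mv := blade [set j].
Definition vec (v : vf) : mv := \sum_i fscale (v i) (fE i).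
Definition evf (i : 'I_n) : vf := [ffun k => (k == i)%:R].

Definition dot (a b : vf) : F := \sum_i s i * a i * b i.

(* d i = the derivation partial_{E_i} on functions; pd d a = partial_a *)
Definition pd (d : 'I_n -> F -> F) (a : vf) (x : F) : F := \sum_i a i * d i x.

Definition is_frame_derivation (d : 'I_n -> F -> F) :=
  forall i, (forall x y, d i (x + y) = d i x + d i y) /\
            (forall x y, d i (x * y) = d i x * y + x * d i y).

Definition metric_connection (d : 'I_n -> F -> F) (tD : vf -> vf -> vf) :=
  [/\ forall (al be : F) (a b v : vf),
        tD (fscale al a + fscale be b) v = fscale al (tD a v) + fscale be (tD b v),
      forall (a v w : vf), tD a (v + w) = tD a v + tD a w,
      forall (a v : vf) (la : F), tD a (fscale la v) = fscale (pd d a la) v + fscale la (tD a v)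
    & forall (c a b : vf), pd d c (dot a b) = dot (tD c a) b + dot a (tD c b)].

(* D satisfies the defining rules (i)-(v) of the paper *)
Definition defines_D (d : 'I_n -> F -> F) (tD : vf -> vf -> vf) (D : vf -> mv -> mv) :=
  [/\ forall (al be : F) (a b : vf) (A : mv),
        D (fscale al a + fscale be b) A = fscale al (D a A) + fscale be (D b A),
      forall i, D (evf i) mv1 = 0,
      forall i j, D (evf i) (fE j) = vec (tD (evf i) (evf j)),
      forall (a : vf) (A : mv),
        D a A = \sum_(J : {set 'I_n}) (fscale (pd d a (A J)) (blade J) + fscale (A J) (D a (blade J)))
    & forall (a : vf) (j : 'I_n) (K : {set 'I_n}),
        K != set0 -> (forall k, k \in K -> (j < k)%N) ->
        D a (mvmul (fE j) (blade K)) = mvmul (D a (fE j)) (blade K) + mvmul (fE j) (D a (blade K))].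

Definition strprod (js : seq 'I_n) : mv := foldr (fun j X => mvmul (fE j) X) mv1 js.

End GA.

(* Main.v *)
Require Import Defs.
From HB Require Import structures.
From mathcomp Require Import all_boot all_order all_algebra.
From mathcomp Require Import ring.
Import GRing.Theory.
Local Open Scope ring_scope.
Set Implicit Arguments. Unset Strict Implicit.

Section Alg.
Variables (F : comNzRingType) (n : nat) (s : 'I_n -> F).
Hypothesis hs : forall i, s i = 1 \/ s i = -1.
Local Notation mv := {ffun {set 'I_n} -> F}.
Implicit Types A B C K : {set 'I_n}.
Implicit Types j k : 'I_n.

Lemma in_symd (x : 'I_n) A B : (x \in symd A B) = (x \in A) (+) (x \in B).
Proof. by rewrite !inE; case: (x \in A); case: (x \in B). Qed.

Lemma symdK A B : symd A (symd A B) = B.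
Proof. by apply/setP=> x; rewrite !in_symd; case: (x \in A); case: (x \in B). Qed.
Lemma symdC A B : symd A B = symd B A.
Proof. by apply/setP=> x; rewrite !in_symd; case: (x \in A); case: (x \in B). Qed.
Lemma symdA A B C : symd A (symd B C) = symd (symd A B) C.
Proof. by apply/setP=> x; rewrite !in_symd; case: (x \in A); case: (x \in B); case: (x \in C). Qed.
Lemma symd0 A : symd A set0 = A.
Proof. by apply/setP=> x; rewrite !in_symd inE; case: (x \in A). Qed.
Lemma symdd A : symd A A = set0.
Proof. by apply/setP=> x; rewrite !in_symd inE; case: (x \in A). Qed.
Lemma symd_eq0 A B : (symd A B == set0) = (A == B).
Proof.
apply/eqP/eqP => [h|->]; last exact: symdd.
by rewrite -(symdK A B) h symd0.
Qed.

Definition cc (a b : 'I_n) : F := if (b < a)%N then -1 else if a == b then s a else 1.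

Lemma bsignE A B : bsign s A B = \prod_(a in A) \prod_(b in B) cc a b.
Proof.
rewrite /bsign.
transitivity (\prod_(a in A) \prod_(b in B) ((if (b < a)%N then -1 else 1) * (if a == b then s a else 1))); last first.
  apply: eq_bigr => a _; apply: eq_bigr => b _; rewrite /cc.
  case: ltnP => h; case: eqP => e //; rewrite ?mulr1 ?mul1r //.
  by subst; rewrite ltnn in h.
rewrite [RHS](eq_bigr (fun a : 'I_n => (\prod_(b in B) (if (b < a)%N then -1 else 1)) * \prod_(b in B) (if a == b then s a else 1))); last by move=> a _; rewrite big_split.
rewrite big_split /=; congr (_ * _).
  rewrite -prodr_const pair_big_dep /= big_mkcond [RHS]big_mkcond /=.
  apply: eq_bigr => [[a b]] _ /=; rewrite inE /=.
  by case: (a \in A); case: (b \in B); case: ltnP.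
rewrite [RHS]big_mkcond [LHS]big_mkcond /=; apply: eq_bigr => a _.
rewrite inE; case: (boolP (a \in A)) => aA //=.
rewrite big_mkcond /= (bigD1 a) //= eqxx big1 ?mulr1; last first.
  by move=> b; rewrite eq_sym => /negbTE ->; case: (b \in B).
by case: (a \in B).
Qed.

Definition pm1 (x : F) := x = 1 \/ x = -1.
Lemma pm1M x y : pm1 x -> pm1 y -> pm1 (x * y).
Proof.
by move=> [->|->] [->|->]; rewrite ?mulr1 ?mul1r ?mulrNN ?mulr1; [left|right|right|left].
Qed.
Lemma pm1_sq x : pm1 x -> x * x = 1.
Proof. by move=> [->|->]; rewrite ?mulr1 ?mulrNN ?mulr1. Qed.

Lemma cc_pm a b : pm1 (cc a b).
Proof. rewrite /cc; case: ltnP => _; [by right|]; case: eqP => _; [exact: hs|by left]. Qed.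

Lemma prod_pm (I : finType) (P : pred I) (g : I -> F) :
  (forall i, pm1 (g i)) -> pm1 (\prod_(i | P i) g i).
Proof. by move=> h; apply: big_ind => //; [left|exact: pm1M]. Qed.

Lemma bsign_pm A B : pm1 (bsign s A B).
Proof. by rewrite bsignE; apply: prod_pm => a; apply: prod_pm => b; apply: cc_pm. Qed.

Lemma prod_symd (g : 'I_n -> F) A B : (forall x, g x * g x = 1) ->
  \prod_(x in symd A B) g x = \prod_(x in A) g x * \prod_(x in B) g x.
Proof.
move=> hg; rewrite big_mkcond [\prod_(x in A) _]big_mkcond [\prod_(x in B) _]big_mkcond.
rewrite -big_split /=; apply: eq_bigr => x _; rewrite in_symd.
by case: (x \in A); case: (x \in B); rewrite /= ?mulr1 ?mul1r ?hg.
Qed.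

Lemma bsign_symdr A B C : bsign s A (symd B C) = bsign s A B * bsign s A C.
Proof.
rewrite !bsignE -big_split; apply: eq_bigr => a _.
by apply: prod_symd => x; apply: pm1_sq; apply: cc_pm.
Qed.

Lemma bsign_symdl A B C : bsign s (symd A B) C = bsign s A C * bsign s B C.
Proof.
rewrite !bsignE; apply: prod_symd => x.
by apply: pm1_sq; apply: prod_pm => c; apply: cc_pm.
Qed.

Lemma bsign0l B : bsign s set0 B = 1.
Proof. by rewrite bsignE big_set0. Qed.
Lemma bsign0r A : bsign s A set0 = 1.
Proof. by rewrite bsignE big1 // => a _; rewrite big_set0. Qed.
Lemma bsign11 j k : bsign s [set j] [set k] = cc j k.
Proof. by rewrite bsignE !big_set1. Qed.
Lemma bsign1_lt j K : (forall k, k \in K -> (j < k)%N) -> bsign s [set j] K = 1.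
Proof.
move=> h; rewrite bsignE big_set1 big1 // => k kK; rewrite /cc.
have := h k kK; case: ltngtP => // jk _; by rewrite ifN // neq_ltn jk.
Qed.
Local Notation M := (mvmul s).
Local Notation bs := (bsign s).
Implicit Types X Y Z : mv.

Lemma mvmulE X Y K : M X Y K = \sum_A bs A (symd A K) * X A * Y (symd A K).
Proof.
rewrite ffunE; apply: eq_bigr => A _.
rewrite (bigD1 (symd A K)) //= symdK eqxx big1 ?addr0 // => B hB.
rewrite ifN //; apply: contra hB => /eqP <-; by rewrite symdK.
Qed.

Lemma mvmulDl X X' Y : M (X + X') Y = M X Y + M X' Y.
Proof.
apply/ffunP=> K; rewrite [RHS]ffunE !mvmulE -big_split; apply: eq_bigr => A _.
by rewrite ffunE mulrDr mulrDl.
Qed.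
Lemma mvmulDr X Y Y' : M X (Y + Y') = M X Y + M X Y'.
Proof.
apply/ffunP=> K; rewrite [RHS]ffunE !mvmulE -big_split; apply: eq_bigr => A _.
by rewrite ffunE mulrDr.
Qed.
Lemma mvmulZl c X Y : M (fscale c X) Y = fscale c (M X Y).
Proof.
apply/ffunP=> K; rewrite /fscale [RHS]ffunE !mvmulE mulr_sumr; apply: eq_bigr => A _.
rewrite ffunE; ring.
Qed.
Lemma mvmulZr c X Y : M X (fscale c Y) = fscale c (M X Y).
Proof.
apply/ffunP=> K; rewrite /fscale [RHS]ffunE !mvmulE mulr_sumr; apply: eq_bigr => A _.
rewrite ffunE; ring.
Qed.
Lemma mvmul0l Y : M 0 Y = 0.
Proof. by apply/ffunP=> K; rewrite [RHS]ffunE mvmulE big1 // => A _; rewrite ffunE mulr0 mul0r. Qed.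
Lemma mvmul0r X : M X 0 = 0.
Proof. by apply/ffunP=> K; rewrite [RHS]ffunE mvmulE big1 // => A _; rewrite ffunE mulr0. Qed.
Lemma mvmulNl X Y : M (- X) Y = - M X Y.
Proof. by apply: (addrI (M X Y)); rewrite -mvmulDl !subrr mvmul0l. Qed.
Lemma mvmulNr X Y : M X (- Y) = - M X Y.
Proof. by apply: (addrI (M X Y)); rewrite -mvmulDr !subrr mvmul0r. Qed.

Lemma mvmul_suml (I : Type) (r : seq I) (P : pred I) (G : I -> mv) Y :
  M (\sum_(i <- r | P i) G i) Y = \sum_(i <- r | P i) M (G i) Y.
Proof. by apply: (big_morph (fun X => M X Y)) => [X X'|]; [exact: mvmulDl|exact: mvmul0l]. Qed.
Lemma mvmul_sumr (I : Type) (r : seq I) (P : pred I) (G : I -> mv) X :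
  M X (\sum_(i <- r | P i) G i) = \sum_(i <- r | P i) M X (G i).
Proof. by apply: (big_morph (fun Y => M X Y)) => [Y Y'|]; [exact: mvmulDr|exact: mvmul0r]. Qed.

Lemma mvmulA X Y Z : M (M X Y) Z = M X (M Y Z).
Proof.
apply/ffunP=> K; rewrite !mvmulE.
under eq_bigr => Mm _ do rewrite mvmulE mulr_sumr mulr_suml.
rewrite exchange_big /=; apply: eq_bigr => A _.
rewrite mvmulE mulr_sumr (reindex_inj (can_inj (symdK A))) /=.
apply: eq_bigr => N _.
rewrite !symdK.
have e1 : symd (symd A N) K = symd N (symd A K).
  by rewrite symdA (symdC A N).
rewrite e1.
set C := symd N (symd A K).
have e2 : symd A K = symd N C by rewrite /C symdK.
rewrite {1}e2 bsign_symdl bsign_symdr.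
ring.
Qed.

Lemma mvmul1l Y : M (mv1 F n) Y = Y.
Proof.
apply/ffunP=> K; rewrite mvmulE (bigD1 set0) //= big1 ?addr0.
  by rewrite ffunE eqxx /= bsign0l !mul1r symdC symd0.
by move=> A hA; rewrite ffunE (negbTE hA) mulr0 mul0r.
Qed.
Lemma mvmul1r X : M X (mv1 F n) = X.
Proof.
apply/ffunP=> K; rewrite mvmulE (bigD1 K) //= big1 ?addr0.
  by rewrite ffunE symdd eqxx /= bsign0r mul1r mulr1.
by move=> A hA; rewrite ffunE symd_eq0 (negbTE hA) mulr0.
Qed.

Lemma mvmul_blade A B : M (blade F A) (blade F B) = fscale (bs A B) (blade F (symd A B)).
Proof.
apply/ffunP=> K; rewrite mvmulE (bigD1 A) //= big1 ?addr0; last first.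
  by move=> A' hA; rewrite ffunE (negbTE hA) mulr0 mul0r.
rewrite !ffunE eqxx /= mulr1.
have -> : (symd A K == B) = (K == symd A B).
  by apply/eqP/eqP => [<-|->]; rewrite symdK.
by case: eqP => [->|_]; rewrite ?symdK ?mulr0.
Qed.


Lemma mvD X Y K : (X + Y) K = X K + Y K. Proof. by rewrite ffunE. Qed.
Lemma mvN X K : (- X) K = - X K. Proof. by rewrite ffunE. Qed.
Lemma mv0 K : (0 : mv) K = 0. Proof. by rewrite ffunE. Qed.
Lemma fscaleE (T : finType) c (f : {ffun T -> F}) x : fscale c f x = c * f x.
Proof. by rewrite ffunE. Qed.
Lemma fscale1 (T : finType) (f : {ffun T -> F}) : fscale 1 f = f.
Proof. by apply/ffunP=> x; rewrite fscaleE mul1r. Qed.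
Lemma fscale0 (T : finType) (f : {ffun T -> F}) : fscale 0 f = 0.
Proof. by apply/ffunP=> x; rewrite fscaleE mul0r ffunE. Qed.
Lemma fscaler0 (T : finType) c : fscale c (0 : {ffun T -> F}) = 0.
Proof. by apply/ffunP=> x; rewrite fscaleE !ffunE mulr0. Qed.
Lemma fscaleDl (T : finType) a b (f : {ffun T -> F}) : fscale (a + b) f = fscale a f + fscale b f.
Proof. by apply/ffunP=> x; rewrite !ffunE mulrDl. Qed.
Lemma fscaleDr (T : finType) c (f g : {ffun T -> F}) : fscale c (f + g) = fscale c f + fscale c g.
Proof. by apply/ffunP=> x; rewrite !ffunE mulrDr. Qed.
Lemma fscaleA (T : finType) a b (f : {ffun T -> F}) : fscale a (fscale b f) = fscale (a * b) f.
Proof. by apply/ffunP=> x; rewrite !fscaleE mulrA. Qed.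
Lemma fscale_sum (I : Type) (r : seq I) (P : pred I) (G : I -> mv) c :
  fscale c (\sum_(i <- r | P i) G i) = \sum_(i <- r | P i) fscale c (G i).
Proof. by apply: (big_morph (fscale c)) => [f g|]; [exact: fscaleDr|exact: fscaler0]. Qed.

Lemma mv_expand X : X = \sum_J fscale (X J) (blade F J).
Proof.
apply/ffunP=> K; rewrite sum_ffunE (bigD1 K) //= big1 ?addr0.
  by rewrite fscaleE ffunE eqxx mulr1.
by move=> J hJ; rewrite fscaleE ffunE eq_sym (negbTE hJ) mulr0.
Qed.

Lemma blade_split k A : k \in A -> (forall x, x \in A :\ k -> (k < x)%N) ->
  blade F A = M (fE F k) (blade F (A :\ k)).
Proof.
move=> kA h; rewrite /fE mvmul_blade bsign1_lt // fscale1; congr blade.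
apply/setP=> x; rewrite in_symd !inE; case: (eqVneq x k) => [->|] //=; by rewrite kA.
Qed.

Lemma fE_sq j : M (fE F j) (fE F j) = fscale (s j) (mv1 F n).
Proof. by rewrite /fE mvmul_blade bsign11 symdd /cc ltnn eqxx. Qed.

Lemma cc_anti j k : j != k -> cc j k + cc k j = 0.
Proof.
move=> jk; rewrite /cc (negbTE jk) eq_sym (negbTE jk).
case: (ltngtP j k) => h; rewrite ?subrr ?addrN //.
  by rewrite addrC subrr.
by move/eqP: jk; case; apply: val_inj.
Qed.

Lemma fE_anti j k : j != k -> M (fE F j) (fE F k) = - M (fE F k) (fE F j).
Proof.
move=> jk; apply/eqP; rewrite -addr_eq0 /fE !mvmul_blade !bsign11 (symdC [set k]).
by rewrite -fscaleDl cc_anti // fscale0.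
Qed.

Lemma antiv (a : {ffun 'I_n -> F}) k :
  M (vec a) (fE F k) + M (fE F k) (vec a) = fscale (s k * a k + s k * a k) (mv1 F n).
Proof.
rewrite /vec mvmul_suml mvmul_sumr -big_split /= (bigD1 k) //= big1 ?addr0.
  rewrite mvmulZl mvmulZr fE_sq !fscaleA -fscaleDl; congr fscale; ring.
move=> m hm; rewrite mvmulZl mvmulZr -fscaleDr fE_anti // addNr fscaler0 //.
Qed.


Variables (d : 'I_n -> F -> F) (tD : {ffun 'I_n -> F} -> {ffun 'I_n -> F} -> {ffun 'I_n -> F})
  (D : {ffun 'I_n -> F} -> mv -> mv).
Hypothesis hd : is_frame_derivation d.
Hypothesis hmc : metric_connection s d tD.
Hypothesis hD : defines_D s d tD D.

Lemma D0 (A : mv) : D 0 A = 0.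
Proof.
case: hD => h1 _ _ _ _.
by have := h1 0 0 0 0 A; rewrite !fscale0 !addr0.
Qed.

Lemma D_decomp (a : {ffun 'I_n -> F}) X : D a X = \sum_k fscale (a k) (D (evf F k) X).
Proof.
case: hD => h1 _ _ _ _.
have ea : a = \sum_k fscale (a k) (evf F k).
  apply/ffunP=> m; rewrite sum_ffunE (bigD1 m) //= big1 ?addr0.
    by rewrite fscaleE ffunE eqxx mulr1.
  by move=> k hk; rewrite fscaleE ffunE eq_sym (negbTE hk) mulr0.
rewrite {1}ea !(big_mkcond predT) /=.
elim: (index_enum _) => [|k r IH]; first by rewrite !big_nil D0.
by rewrite !big_cons -[X in D (_ + X)]fscale1 h1 fscale1 IH.
Qed.

Section Fixi.
Variable i : 'I_n.
Local Notation dl := (D (evf F i)).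
Local Notation dd := (d i).

Lemma ddD x y : dd (x + y) = dd x + dd y. Proof. by case: (hd i). Qed.
Lemma ddM x y : dd (x * y) = dd x * y + x * dd y. Proof. by case: (hd i). Qed.
Lemma dd0 : dd 0 = 0.
Proof. have h := ddD 0 0; rewrite addr0 in h; apply: (addrI (dd 0)); by rewrite -h addr0. Qed.
Lemma dd1 : dd 1 = 0.
Proof. have h := ddM 1 1; rewrite !mulr1 !mul1r in h; apply: (addrI (dd 1)); by rewrite -h addr0. Qed.
Lemma ddN x : dd (- x) = - dd x.
Proof. apply: (addrI (dd x)); by rewrite -ddD !subrr dd0. Qed.
Lemma dd_pm x : pm1 x -> dd x = 0.
Proof. by case=> ->; rewrite ?ddN dd1 ?oppr0. Qed.

Lemma pd_evf x : pd d (evf F i) x = dd x.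
Proof.
rewrite /pd (bigD1 i) //= ffunE eqxx mul1r big1 ?addr0 // => k hk.
by rewrite ffunE (negbTE hk) mul0r.
Qed.

Definition dfun (X : mv) : mv := [ffun J => dd (X J)].
Definition Lf (X : mv) : mv := \sum_J fscale (X J) (dl (blade F J)).

Lemma dlE X : dl X = dfun X + Lf X.
Proof.
case: hD => _ _ _ h4 _; rewrite h4 big_split /=; congr (_ + _).
rewrite [dfun X]mv_expand; apply: eq_bigr => J _; by rewrite pd_evf ffunE.
Qed.

Lemma dlD X Y : dl (X + Y) = dl X + dl Y.
Proof.
rewrite !dlE.
have -> : dfun (X + Y) = dfun X + dfun Y by apply/ffunP=> K; rewrite !ffunE ddD.
have -> : Lf (X + Y) = Lf X + Lf Y.
  by rewrite /Lf -big_split; apply: eq_bigr => J _; rewrite ffunE fscaleDl.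
by rewrite -!addrA; congr (_ + _); rewrite addrC -addrA; congr (_ + _); rewrite addrC.
Qed.
Lemma dl0 : dl 0 = 0.
Proof. apply: (addrI (dl 0)); by rewrite -dlD !addr0. Qed.
Lemma dlN X : dl (- X) = - dl X.
Proof. apply: (addrI (dl X)); by rewrite -dlD !subrr dl0. Qed.
Lemma dlZ c X : dl (fscale c X) = fscale (dd c) X + fscale c (dl X).
Proof.
rewrite !dlE fscaleDr.
have -> : dfun (fscale c X) = fscale (dd c) X + fscale c (dfun X).
  by apply/ffunP=> K; rewrite !ffunE ddM.
have -> : Lf (fscale c X) = fscale c (Lf X).
  by rewrite /Lf fscale_sum; apply: eq_bigr => J _; rewrite fscaleE fscaleA.
by rewrite addrA.
Qed.
Lemma dl_sum (I : Type) (r : seq I) (P : pred I) (G : I -> mv) :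
  dl (\sum_(k <- r | P k) G k) = \sum_(k <- r | P k) dl (G k).
Proof. by apply: (big_morph dl) => [X Y|]; [exact: dlD|exact: dl0]. Qed.

Lemma dlE_j j : dl (fE F j) = vec (tD (evf F i) (evf F j)).
Proof. by case: hD. Qed.
Lemma dl1 : dl (mv1 F n) = 0.
Proof. by case: hD. Qed.

Lemma dot_evf_r (w : {ffun 'I_n -> F}) k : dot s w (evf F k) = s k * w k.
Proof.
rewrite /dot (bigD1 k) //= ffunE eqxx mulr1 big1 ?addr0 // => m hm.
by rewrite ffunE (negbTE hm) mulr0.
Qed.
Lemma dot_evf_l (w : {ffun 'I_n -> F}) j : dot s (evf F j) w = s j * w j.
Proof.
rewrite /dot (bigD1 j) //= ffunE eqxx mulr1 big1 ?addr0 // => m hm.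
by rewrite ffunE (negbTE hm) mulr0 mul0r.
Qed.

Lemma metric_fact j k :
  s k * tD (evf F i) (evf F j) k + s j * tD (evf F i) (evf F k) j = 0.
Proof.
case: hmc => _ _ _ h4.
rewrite -dot_evf_r -dot_evf_l -h4 pd_evf.
have -> : dot s (evf F j) (evf F k) = if j == k then s j else 0.
  rewrite dot_evf_l ffunE; case: eqP => [->|_]; by rewrite ?mulr1 ?mulr0.
by case: eqP => _; [apply: dd_pm; apply: hs|exact: dd0].
Qed.

Lemma anti_dl j k :
  M (dl (fE F j)) (fE F k) + M (fE F k) (dl (fE F j)) +
  (M (dl (fE F k)) (fE F j) + M (fE F j) (dl (fE F k))) = 0.
Proof.
rewrite !dlE_j !antiv -fscaleDl.
have -> : s k * tD (evf F i) (evf F j) k + s k * tD (evf F i) (evf F j) k +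
  (s j * tD (evf F i) (evf F k) j + s j * tD (evf F i) (evf F k) j) =
  (s k * tD (evf F i) (evf F j) k + s j * tD (evf F i) (evf F k) j) *+ 2.
  by rewrite mulr2n; ring.
by rewrite metric_fact mul0rn fscale0.
Qed.


Definition Q j Y := dl (M (fE F j) Y) = M (dl (fE F j)) Y + M (fE F j) (dl Y).

Lemma QD j X Y : Q j X -> Q j Y -> Q j (X + Y).
Proof.
rewrite /Q => hX hY; rewrite mvmulDr dlD hX hY dlD !mvmulDr.
by rewrite addrACA.
Qed.
Lemma QZ j c Y : Q j Y -> Q j (fscale c Y).
Proof.
rewrite /Q => hY; rewrite mvmulZr dlZ hY dlZ !mvmulDr !mvmulZr fscaleDr.
by rewrite addrCA.
Qed.
Lemma Q0 j : Q j 0.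
Proof. by rewrite /Q mvmul0r dl0 mvmul0r mvmul0r addr0. Qed.
Lemma Q_all j : (forall K, Q j (blade F K)) -> forall Y, Q j Y.
Proof.
move=> h Y; rewrite (mv_expand Y); apply: big_ind => //.
- exact: Q0.
- exact: QD.
- by move=> J _; apply: QZ.
Qed.

Lemma Q_lt j K : (forall k, k \in K -> (j < k)%N) -> Q j (blade F K).
Proof.
move=> h; case: (eqVneq K set0) => [->|Kn0].
  rewrite /Q; change (blade F set0) with (mv1 F n).
  by rewrite !mvmul1r dl1 mvmul0r addr0.
by case: hD => _ _ _ _ h5; apply: h5.
Qed.

Lemma Q_blade m : forall K j, (#|K| < m)%N -> Q j (blade F K).
Proof.
elim: m => // m IH K j hK.
case: (eqVneq K set0) => [->|Kn0]; first by apply: Q_lt => k; rewrite inE.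
have [k0 k0K] := set0Pn K Kn0.
case: (arg_minnP (fun x : 'I_n => val x) k0K) => k kK0 kmin.
have kK : k \in K := kK0.
set K' := K :\ k.
have hk' : forall x, x \in K' -> (k < x)%N.
  move=> x; rewrite !inE => /andP [xk xK].
  by rewrite ltn_neqAle kmin // andbT (inj_eq val_inj) eq_sym.
have cardK' : (#|K'| < m)%N by move: hK; rewrite (cardsD1 k K) kK add1n ltnS.
have bs_ := blade_split kK hk'.
have Qk' := Q_lt hk'.
rewrite /Q in Qk'.
case: (ltngtP j k) => hjk.
- by apply: Q_lt => x xK; exact: leq_trans hjk (kmin _ xK).
- have jk : j != k by rewrite neq_ltn hjk orbT.
  rewrite /Q bs_ -mvmulA (fE_anti jk) mvmulNl mvmulA dlN.
  have QY : Q k (M (fE F j) (blade F K')).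
    rewrite {1}/fE mvmul_blade; apply: QZ; apply: Q_lt => x.
    rewrite in_symd inE; case: (eqVneq x j) => [-> _ //|_ /=]; exact: hk'.
  have IHj := IH K' j cardK'.
  rewrite /Q in QY IHj.
  rewrite QY IHj Qk' !mvmulDr -!mvmulA (fE_anti jk) mvmulNl.
  have h' := congr1 (fun Z => M Z (blade F K')) (anti_dl j k).
  rewrite /= mvmul0l !mvmulDl in h'.
  apply/ffunP=> x; have := congr1 (fun f : mv => f x) h'.
  rewrite /= !mvD !mvN mv0 => e.
  rewrite ?mvD ?mvN ?mvD ?mvN -[LHS]addr0 -[in LHS]e /K'; ring.
- have ejk : j = k by apply: val_inj.
  subst j.
  rewrite /Q bs_ Qk' -mvmulA fE_sq mvmulZl mvmul1l dlZ dd_pm; last exact: hs.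
  rewrite fscale0 add0r mvmulDr -!mvmulA fE_sq mvmulZl mvmul1l addrA -mvmulDl.
  by rewrite dlE_j antiv metric_fact fscale0 mvmul0l add0r.
Qed.

Definition P X := forall Y, dl (M X Y) = M (dl X) Y + M X (dl Y).

Lemma P_fE j : P (fE F j).
Proof.
move=> Y; apply: Q_all => K; exact: (@Q_blade #|K|.+1).
Qed.
Lemma PD X X' : P X -> P X' -> P (X + X').
Proof.
move=> h h' Y; rewrite mvmulDl dlD h h' dlD !mvmulDl.
by rewrite addrACA.
Qed.
Lemma PZ c X : P X -> P (fscale c X).
Proof.
move=> h Y; rewrite mvmulZl dlZ h dlZ mvmulDl !mvmulZl fscaleDr.
by rewrite addrA.
Qed.
Lemma P0 : P 0.
Proof. by move=> Y; rewrite mvmul0l dl0 !mvmul0l addr0. Qed.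
Lemma PM X X' : P X -> P X' -> P (M X X').
Proof.
move=> h h' Y; rewrite mvmulA h h' mvmulDr h mvmulDl !mvmulA.
by rewrite addrA.
Qed.
Lemma P_blade m : forall K, (#|K| < m)%N -> P (blade F K).
Proof.
elim: m => // m IH K hK.
case: (eqVneq K set0) => [->|Kn0].
  change (blade F set0) with (mv1 F n).
  by rewrite /P => Y; rewrite !mvmul1l dl1 mvmul0l add0r.
have [k0 k0K] := set0Pn K Kn0.
case: (arg_minnP (fun x : 'I_n => val x) k0K) => k kK0 kmin.
have kK : k \in K := kK0.
have hk' : forall x, x \in K :\ k -> (k < x)%N.
  move=> x; rewrite !inE => /andP [xk xK].
  by rewrite ltn_neqAle kmin // andbT (inj_eq val_inj) eq_sym.
have cardK' : (#|K :\ k| < m)%N by move: hK; rewrite (cardsD1 k K) kK add1n ltnS.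
rewrite (blade_split kK hk'); apply: PM; first exact: P_fE.
exact: IH.
Qed.
Lemma P_all X : P X.
Proof.
rewrite (mv_expand X); apply: big_ind => //.
- exact: P0.
- exact: PD.
- by move=> J _; apply: PZ; apply: (@P_blade #|J|.+1).
Qed.

End Fixi.
End Alg.

Theorem mainTheorem18 (F : comNzRingType) (n : nat) (s : 'I_n -> F)
    (d : 'I_n -> F -> F) (tD : {ffun 'I_n -> F} -> {ffun 'I_n -> F} -> {ffun 'I_n -> F})
    (D : {ffun 'I_n -> F} -> {ffun {set 'I_n} -> F} -> {ffun {set 'I_n} -> F}) :
  (forall i, s i = 1 \/ s i = -1) ->
  is_frame_derivation d ->
  metric_connection s d tD ->
  defines_D s d tD D ->
  (forall (i : 'I_n) (js : seq 'I_n),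
     D (evf F i) (strprod s js) =
     \sum_(r < size js)
        mvmul s (mvmul s (strprod s (take r js)) (D (evf F i) (fE F (nth i js r))))
                (strprod s (drop r.+1 js))) /\
  (forall (a : {ffun 'I_n -> F}) (A B : {ffun {set 'I_n} -> F}),
     D a (mvmul s A B) = mvmul s (D a A) B + mvmul s A (D a B)).
Proof.
move=> hs hd hmc hD; split.
  move=> i; elim=> [|j js IH].
    by rewrite /= (dl1 hD) big_ord0.
  rewrite [strprod s (j :: js)]/= (P_all hs hd hmc hD) IH big_ord_recl /=.
  rewrite mvmul1l mvmul_sumr; congr (_ + _); first by rewrite drop0.
  rewrite -/(size js); apply: eq_bigr => r _.
  by rewrite /bump /= !(mvmulA hs).
move=> a A B; rewrite !(D_decomp hD) mvmul_suml mvmul_sumr -big_split /=.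
apply: eq_bigr => k _.
by rewrite (P_all hs hd hmc hD) mvmulZl mvmulZr fscaleDr.
Qed.
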